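(* Let $(A,u_A)$ be an abstract state space and let $(B,u_B)$ be any fixed abstract state space whose ordered linear space $B$ is order-isomorphic to $A^*$. The following are equivalent: (a) $A$ is homogeneous; (b) every normalized state $\alpha$ in the interior of $A_+$ is the $A$-marginal of an isomorphism state in $B\otimes_{\max}A$, i.e., there is a state $\omega\in B\otimes_{\max}A$ such that $\hat\omega:B^*\to A$ is an order-isomorphism and $\hat\omega(u_B)=\alpha$.
   Context: An abstract state space is a pair $(A,u_A)$ where $A$ is a finite-dimensional real vector space with a closed, pointed, generating convex cone $A_+$, and $u_A$ is an interior point of the dual cone $A^*_+$; a normalized state is $\alpha\in A_+$ with $u_A(\alpha)=1$. An order-isomorphism is a linear bijection $\phi$ with $\phi(x)\ge0$ iff $x\ge0$. $A$ is homogeneous if the group of order-automorphisms of $A$ acts transitively on the interior of $A_+$. $B\otimes_{\max}A$ is the space of bilinear forms on $B^*\times A^*$ nonnegative on $B^*_+\times A^*_+$; a state is such a form with $\omega(u_B,u_A)=1$; $\hat\omega:B^*\to A$ is defined by $\hat\omega(b)(a)=\omega(b,a)$, and the $A$-marginal of $\omega$ is $\hat\omega(u_B)$. An isomorphism state is a state $\omega$ for which $\hat\omega$ is an order-isomorphism. *)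

(* Defs.v *)
From HB Require Import structures.
From mathcomp Require Import all_boot all_order all_algebra.
From mathcomp Require Import all_classical all_reals all_analysis.
Set Implicit Arguments. Unset Strict Implicit. Unset Printing Implicit Defensive.
Import Order.TTheory GRing.Theory Num.Theory.
Import numFieldNormedType.Exports.
Local Open Scope classical_set_scope.
Local Open Scope ring_scope.

(* A finite-dimensional real vector space of dimension n is modelled as
   'rV[R]_n (with its canonical normed topology).  Its dual is again 'rV[R]_n
   via the standard pairing  f(x) = \sum_i f_i x_i. *)

Definition pair (R : realType) (n : nat) (f x : 'rV[R]_n) : R :=
  \sum_(i < n) f ord0 i * x ord0 i.

Definition dual_cone (R : realType) (n : nat) (K : set 'rV[R]_n) : set 'rV[R]_n :=
  [set f | forall x, K x -> 0 <= pair f x].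

Definition proper_cone (R : realType) (n : nat) (K : set 'rV[R]_n) : Prop :=
  [/\ (K 0 /\ (forall x y, K x -> K y -> K (x + y))),
      (forall (t : R) x, 0 <= t -> K x -> K (t *: x)),
      closed K,
      (forall x, K x -> K (- x) -> x = 0)
    & (forall z, exists x y, K x /\ K y /\ z = x - y)].

(* abstract state space (A, u_A): A = 'rV_n ordered by the cone K,
   u in the interior of the dual cone *)
Definition abstract_state_space (R : realType) (n : nat)
    (K : set 'rV[R]_n) (u : 'rV[R]_n) : Prop :=
  proper_cone K /\ interior (dual_cone K) u.

Definition is_linear (R : realType) (U V : lmodType R) (f : U -> V) : Prop :=
  forall (a : R) x y, f (a *: x + y) = a *: f x + f y.

Definition order_iso (R : realType) (m n : nat) (K1 : set 'rV[R]_m)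
    (K2 : set 'rV[R]_n) (f : 'rV[R]_m -> 'rV[R]_n) : Prop :=
  [/\ is_linear f, bijective f & forall x, K2 (f x) <-> K1 x].

Definition homogeneous (R : realType) (n : nat) (K : set 'rV[R]_n) : Prop :=
  forall x y, interior K x -> interior K y ->
    exists g : 'rV[R]_n -> 'rV[R]_n, order_iso K K g /\ g x = y.

(* B (x)_max A : bilinear forms on B^* x A^*, nonnegative on B^*_+ x A^*_+ *)
Definition max_tensor (R : realType) (m n : nat) (KB : set 'rV[R]_m)
    (KA : set 'rV[R]_n) (w : 'rV[R]_m -> 'rV[R]_n -> R) : Prop :=
  [/\ (forall a, @is_linear R _ R^o (fun b => w b a)),
      (forall b, @is_linear R _ R^o (fun a => w b a))
    & (forall b a, dual_cone KB b -> dual_cone KA a -> 0 <= w b a)].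

Definition max_state (R : realType) (m n : nat) (KB : set 'rV[R]_m) (uB : 'rV[R]_m)
    (KA : set 'rV[R]_n) (uA : 'rV[R]_n) (w : 'rV[R]_m -> 'rV[R]_n -> R) : Prop :=
  max_tensor KB KA w /\ w uB uA = 1.

(* \hat w : B^* -> A,  \hat w(b)(a) = w(b,a); under A^** = A its coordinates
   are the values on the standard dual basis vectors. *)
Definition omega_hat (R : realType) (m n : nat) (w : 'rV[R]_m -> 'rV[R]_n -> R)
    (b : 'rV[R]_m) : 'rV[R]_n :=
  \row_(i < n) w b (delta_mx ord0 i).

(* Main.v *)
Require Import Defs.
From HB Require Import structures.
From mathcomp Require Import all_boot all_order all_algebra.
From mathcomp Require Import all_classical all_reals all_analysis.
From mathcomp Require Import ring lra.
Import Order.TTheory GRing.Theory Num.Theory.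
Import numFieldNormedType.Exports.
Local Open Scope classical_set_scope.
Local Open Scope ring_scope.

Set Implicit Arguments. Unset Strict Implicit.
Section S.
Variable R : realType.

Lemma pairDl n (f g x : 'rV[R]_n) : pair (f + g) x = pair f x + pair g x.
Proof. by rewrite /pair -big_split; apply: eq_bigr => i _; rewrite mxE mulrDl. Qed.
Lemma pairDr n (f x y : 'rV[R]_n) : pair f (x + y) = pair f x + pair f y.
Proof. by rewrite /pair -big_split; apply: eq_bigr => i _; rewrite mxE mulrDr. Qed.
Lemma pairZl n a (f x : 'rV[R]_n) : pair (a *: f) x = a * pair f x.
Proof. by rewrite /pair mulr_sumr; apply: eq_bigr => i _; rewrite mxE mulrA. Qed.
Lemma pairZr n a (f x : 'rV[R]_n) : pair f (a *: x) = a * pair f x.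
Proof. by rewrite /pair mulr_sumr; apply: eq_bigr => i _; rewrite mxE mulrCA. Qed.
Lemma pairC n (f x : 'rV[R]_n) : pair f x = pair x f.
Proof. by rewrite /pair; apply: eq_bigr => i _; rewrite mulrC. Qed.
Lemma pair0l n (x : 'rV[R]_n) : pair 0 x = 0.
Proof. by rewrite /pair big1 // => i _; rewrite mxE mul0r. Qed.
Lemma pair0r n (x : 'rV[R]_n) : pair x 0 = 0.
Proof. by rewrite pairC pair0l. Qed.
Lemma pairNl n (f x : 'rV[R]_n) : pair (- f) x = - pair f x.
Proof. by rewrite -scaleN1r pairZl mulN1r. Qed.
Lemma pairNr n (f x : 'rV[R]_n) : pair f (- x) = - pair f x.
Proof. by rewrite -scaleN1r pairZr mulN1r. Qed.
Lemma pair_delta n i (x : 'rV[R]_n) : pair (delta_mx ord0 i) x = x ord0 i.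
Proof.
rewrite /pair (bigD1 i) //= big1 ?addr0 => [|j /negbTE ji]; rewrite !mxE ?eqxx /=.
  by rewrite mul1r.
idtac.
by rewrite ji mul0r.
Qed.
Lemma pair_ge0 n (x : 'rV[R]_n) : 0 <= pair x x.
Proof. by apply: sumr_ge0 => i _; rewrite -expr2 sqr_ge0. Qed.
Lemma pair_gt0 n (x : 'rV[R]_n) : x != 0 -> 0 < pair x x.
Proof.
move=> x0; have [i xi] : exists i, x ord0 i != 0.
  apply/existsP; apply: contraR x0 => /existsPn H; apply/eqP/rowP => i.
  by rewrite mxE; apply/eqP; move: (H i); rewrite negbK.
rewrite /pair (bigD1 i) //=; apply: ltr_pwDl; first by rewrite -expr2 exprn_even_gt0.

by apply: sumr_ge0 => j _; rewrite -expr2 sqr_ge0.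
Qed.
Lemma pair_inj n (x y : 'rV[R]_n) : (forall c, pair c x = pair c y) -> x = y.
Proof. by move=> H; apply/rowP => i; rewrite -!pair_delta H. Qed.
Lemma pair_quad n (w k : 'rV[R]_n) s :
  pair (w + s *: k) (w + s *: k) = pair w w + 2 * s * pair w k + s ^+ 2 * pair k k.
Proof.
rewrite !pairDl !pairDr !pairZl !pairZr (pairC k w); rewrite -!mulrA; set a := pair w w; set b := pair w k; set c := pair k k.
rewrite mulr2n; ring.
Qed.
End S.
Section Lin.
Variable R : realType.
Implicit Types p q : nat.

Lemma lin0 p q (f : 'rV[R]_p -> 'rV[R]_q) : is_linear f -> f 0 = 0.
Proof.
move=> lf; have := lf 1 0 0; rewrite !scale1r addr0.
by move=> /(congr1 (fun v => v - f 0)); rewrite subrr addrK => <-.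
Qed.
Lemma linD p q (f : 'rV[R]_p -> 'rV[R]_q) x y : is_linear f -> f (x + y) = f x + f y.
Proof. by move=> lf; have := lf 1 x y; rewrite !scale1r. Qed.
Lemma linZ p q (f : 'rV[R]_p -> 'rV[R]_q) a x : is_linear f -> f (a *: x) = a *: f x.
Proof. by move=> lf; have := lf a x 0; rewrite !addr0 lin0 // addr0. Qed.
Lemma lin_sum p q (f : 'rV[R]_p -> 'rV[R]_q) (F : 'I_p -> 'rV[R]_p) :
  is_linear f -> f (\sum_i F i) = \sum_i f (F i).
Proof.
move=> lf; apply: (big_morph f) => [x y|]; [exact: linD | exact: lin0].
Qed.
Lemma lin_expand p q (f : 'rV[R]_p -> 'rV[R]_q) x : is_linear f ->
  f x = \sum_i x ord0 i *: f (delta_mx ord0 i).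
Proof.
move=> lf; rewrite {1}(row_sum_delta x) lin_sum //.
by apply: eq_bigr => i _; rewrite linZ.
Qed.
Lemma pair_suml n p (F : 'I_p -> 'rV[R]_n) y c :
  pair (\sum_i c i *: F i) y = \sum_i c i * pair (F i) y.
Proof.
rewrite (big_morph (fun f => pair f y) (fun a b => pairDl a b y) (pair0l y)).
by apply: eq_bigr => i _; rewrite pairZl.
Qed.

Definition adj p q (f : 'rV[R]_p -> 'rV[R]_q) : 'rV[R]_q -> 'rV[R]_p :=
  fun y => \row_i pair (f (delta_mx ord0 i)) y.

Lemma pair_adj p q (f : 'rV[R]_p -> 'rV[R]_q) x y : is_linear f ->
  pair x (adj f y) = pair (f x) y.
Proof.
move=> lf; rewrite (lin_expand x lf) pair_suml /pair.
by apply: eq_bigr => i _; rewrite mxE.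
Qed.

Lemma adj_linear p q (f : 'rV[R]_p -> 'rV[R]_q) : is_linear (adj f).
Proof.
by move=> a x y; apply/rowP => i; rewrite !mxE pairDr pairZr.
Qed.

Lemma inv_linear p q (f : 'rV[R]_p -> 'rV[R]_q) g :
  is_linear f -> cancel f g -> cancel g f -> is_linear g.
Proof.
by move=> lf fg gf a x y; rewrite -{1}(gf x) -{1}(gf y) -lf fg.
Qed.

Lemma comp_linear p q r (f : 'rV[R]_p -> 'rV[R]_q) (g : 'rV[R]_q -> 'rV[R]_r) :
  is_linear f -> is_linear g -> is_linear (fun x => g (f x)).
Proof. by move=> lf lg a x y; rewrite lf lg. Qed.

Lemma comp_bij p q r (f : 'rV[R]_p -> 'rV[R]_q) (g : 'rV[R]_q -> 'rV[R]_r) :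
  bijective f -> bijective g -> bijective (fun x => g (f x)).
Proof.
move=> [f' ff' f'f] [g' gg' g'g]; exists (fun z => f' (g' z)) => x.
  by rewrite gg' ff'.
by rewrite f'f g'g.
Qed.
End Lin.
Section Top.
Variable R : realType.

Lemma norm_coord n (v : 'rV[R]_n) i : `|v ord0 i| <= `|v|.
Proof.
rewrite [leRHS]/Num.norm /= mx_normrE; apply/bigmax_geP; right => /=.
by exists (ord0, i).
Qed.

Lemma norm_le n (v : 'rV[R]_n) M : 0 <= M -> (forall i, `|v ord0 i| <= M) -> `|v| <= M.
Proof.
move=> M0 H; rewrite [leLHS]/Num.norm /= mx_normrE; apply/bigmax_leP; split => //.
by move=> [a b] _ /=; rewrite (ord1 a).
Qed.

Lemma norm_lt n (v : 'rV[R]_n) M : 0 < M -> (forall i, `|v ord0 i| < M) -> `|v| < M.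
Proof.
move=> M0 H; rewrite [ltLHS]/Num.norm /= mx_normrE; apply/bigmax_ltP; split => //.
by move=> [a b] _ /=; rewrite (ord1 a).
Qed.

Lemma pair_continuous n (c : 'rV[R]_n) : continuous (fun y : 'rV[R]_n => pair c y).
Proof.
rewrite /pair; apply: continuous_big => [|i _]; first exact: add_continuous.
move=> x; apply: continuousM; [exact: cst_continuous | exact: coord_continuous].
Qed.

Lemma row_continuous p q (g : 'rV[R]_p -> 'rV[R]_q) :
  (forall i, continuous (fun x => g x ord0 i)) -> continuous g.
Proof.
move=> H x A /nbhs_ballP [e e0 eA].
suff : \forall y \near x, A (g y) by [].
near=> y; apply: eA; rewrite -ball_normE /=; apply: norm_lt => // i.
rewrite !mxE; move: i; near: y; apply: filter_forall => i.
have := H i x _ (nbhsx_ballx (g x ord0 i) e e0).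
by rewrite -ball_normE.
Unshelve. all: by end_near.
Qed.

Lemma adj_continuous p q (f : 'rV[R]_p -> 'rV[R]_q) : continuous (adj f).
Proof.
apply: row_continuous => i; rewrite /adj.
have -> : (fun x => (\row_i0 pair (f (delta_mx ord0 i0)) x) ord0 i) =
   (fun x => pair (f (delta_mx ord0 i)) x) by apply: funext => x; rewrite mxE.
exact: pair_continuous.
Qed.
End Top.
Section Bipolar.
Variable R : realType.

Lemma sqdist_continuous n (z : 'rV[R]_n) :
  continuous (fun v : 'rV[R]_n => pair (z - v) (z - v)).
Proof.
have -> : (fun v : 'rV[R]_n => pair (z - v) (z - v)) =
  (fun v => \sum_i (z ord0 i - v ord0 i) * (z ord0 i - v ord0 i)).
  by apply: funext => v; apply: eq_bigr => i _; rewrite !mxE.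
apply: continuous_big => [|i _]; first exact: add_continuous.
move=> x; apply: (continuousM (s := fun v : 'rV[R]_n => z ord0 i - v ord0 i)
  (t := fun v : 'rV[R]_n => z ord0 i - v ord0 i));
  apply: (continuousB (f := fun _ : 'rV[R]_n => z ord0 i) (g := fun v : 'rV[R]_n => v ord0 i));
  [exact: cst_continuous | exact: coord_continuous | exact: cst_continuous | exact: coord_continuous].
Qed.

Lemma abs_le_sq1 (a : R) : `|a| <= a ^+ 2 + 1.
Proof. have [a0|a0] := lerP 0 a; [rewrite ger0_norm // | rewrite ltr0_norm //]; nra. Qed.

Lemma pair_term n (w : 'rV[R]_n) i : w ord0 i ^+ 2 <= pair w w.
Proof.
rewrite /pair (bigD1 i) //= -expr2 lerDl; apply: sumr_ge0 => j _.
by rewrite -expr2 sqr_ge0.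
Qed.

Lemma bipolar n (K : set 'rV[R]_n) : proper_cone K ->
  forall z, (forall f, dual_cone K f -> 0 <= pair f z) -> K z.
Proof.
move=> [[K0 KD] KZ Kcl _ _] z Hz; apply: contrapT => nKz.
pose F := fun v : 'rV[R]_n => pair (z - v) (z - v).
pose q0 := pair z z.
pose A := K `&` [set v | F v <= q0].
have A0 : A !=set0 by exists 0; split => //=; rewrite /F subr0.
have Fc : continuous F by exact: sqdist_continuous.
have Acl : closed A.
  apply: closedI => //.
  have -> : [set v | F v <= q0] = F @^-1` [set x | x <= q0] by [].
  apply: preimage_closed; [by move=> v _; exact: Fc | exact: closed_le].
have Abd : bounded_set A.
  exists (`|z| + (q0 + 1)); split; first exact: num_real.
  move=> M /ltW HM v [Kv Fv]; apply: (le_trans _ HM).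
  apply: norm_le => [|i]; first by apply: addr_ge0 => //; apply: addr_ge0 => //; exact: pair_ge0.
  have -> : v ord0 i = z ord0 i - (z - v) ord0 i by rewrite !mxE; ring.
  apply: (le_trans (ler_normB _ _)); apply: lerD; first exact: norm_coord.
  apply: (le_trans (abs_le_sq1 _)); rewrite lerD2r.
  exact: (le_trans (pair_term _ i)).
have [c cA cmin] := EVT_min_rV A0 (bounded_closed_compact Abd Acl) (continuous_subspaceT Fc).
move: cA; rewrite inE => -[Kc Fcq0].
have Fmin : forall v, K v -> F c <= F v.
  move=> v Kv; have [Fv|Fv] := lerP (F v) q0.
    by apply: cmin; rewrite inE.
  exact: (le_trans Fcq0 (ltW Fv)).
have czne : z - c != 0.
  by apply/negP; rewrite subr_eq0 => /eqP zc; apply: nKz; rewrite zc.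
have Fcpos : 0 < F c := pair_gt0 czne.
have dual : dual_cone K (c - z).
  move=> k Kk; rewrite -opprB pairNl oppr_ge0; rewrite leNgt; apply/negP => pgt.
  set p := pair (z - c) k in pgt.
  pose kk := pair k k.
  have kk0 : 0 <= kk := pair_ge0 k.
  pose t := p / (kk + 1).
  have tpos : 0 < t by apply: divr_gt0 => //; rewrite ltr_wpDl.
  have tE : t * (kk + 1) = p by rewrite /t mulfVK // gt_eqF // ltr_wpDl.
  have := Fmin (c + t *: k) (KD _ _ Kc (KZ _ _ (ltW tpos) Kk)).
  rewrite /F; have -> : z - (c + t *: k) = (z - c) + (- t) *: k by apply/rowP => i; rewrite !mxE; ring.
  rewrite pair_quad -/p -/kk => H.
  nra.
have p'0 : 0 <= pair (z - c) c.
  rewrite leNgt; apply/negP => pneg.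
  set p := pair (z - c) c in pneg.
  pose cc := pair c c.
  have cc0 : 0 <= cc := pair_ge0 c.
  pose t := - p / (cc - p + 1).
  have den : 0 < cc - p + 1 by nra.
  have tpos : 0 < t by apply: divr_gt0 => //; rewrite oppr_gt0.
  have tE : t * (cc - p + 1) = - p by rewrite /t mulfVK // gt_eqF.
  have t1 : 1 - t >= 0 by nra.
  have := Fmin ((1 - t) *: c) (KZ _ _ t1 Kc).
  rewrite /F; have -> : z - (1 - t) *: c = (z - c) + t *: c by apply/rowP => i; rewrite !mxE; ring.
  rewrite pair_quad -/p -/cc => H.
  nra.
have := Hz _ dual.
have -> : pair (c - z) z = pair (c - z) ((z - c) + c) by rewrite subrK.
rewrite pairDr -opprB !pairNl -/(F c).
nra.
Unshelve. all: by end_near.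
Qed.
End Bipolar.
Section Interior.
Variable R : realType.

Lemma interior_scale n (K : set 'rV[R]_n) x c :
  (forall (t : R) x, 0 <= t -> K x -> K (t *: x)) ->
  0 < c -> interior K x -> interior K (c *: x).
Proof.
move=> KZ c0 /nbhs_ballP [e e0 eK]; apply/nbhs_ballP; exists (c * e).
  by rewrite /= mulr_gt0.
move=> v; rewrite -ball_normE /= => Hv.
have -> : v = c *: (c^-1 *: v) by rewrite scalerA mulfV ?gt_eqF // scale1r.
apply: KZ; first exact: ltW.
apply: eK; rewrite -ball_normE /=.
have -> : x - c^-1 *: v = c^-1 *: (c *: x - v).
  by rewrite scalerBr scalerA mulVf ?gt_eqF // scale1r.
rewrite normrZ gtr0_norm ?invr_gt0 //.
by rewrite ltr_pdivrMl // .
Qed.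

Lemma interior_trivial n (K : set 'rV[R]_n) :
  (forall (t : R) x, 0 <= t -> K x -> K (t *: x)) ->
  (forall x, K x -> K (- x) -> x = 0) ->
  interior K 0 -> forall z : 'rV[R]_n, z = 0.
Proof.
move=> KZ Kp /nbhs_ballP [e e0 eK] z.
pose d := e / (`|z| + 1).
have d0 : 0 < d by apply: divr_gt0 => //; rewrite ltr_wpDl.
have dz : d * `|z| < e.
  rewrite /d mulrAC ltr_pdivrMr ?ltr_wpDl // ltr_pM2l //; by rewrite ltrDl.
have Kd : forall s : R, `|s| = d -> K (s *: z).
  move=> s sd; apply: eK; rewrite -ball_normE /= sub0r normrN normrZ sd //.
have : d *: z = 0.
  apply: Kp; first by apply: Kd; rewrite gtr0_norm.
  by rewrite -scaleNr; apply: Kd; rewrite normrN gtr0_norm.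
by move/eqP; rewrite scaler_eq0 gt_eqF //= => /eqP.
Qed.

Lemma dual_interior_pos n (K : set 'rV[R]_n) u x :
  interior (dual_cone K) u -> x != 0 -> K x -> 0 < pair u x.
Proof.
move=> /nbhs_ballP [e e0 eK] x0 Kx.
pose d := e / (`|x| + 1).
have d0 : 0 < d by apply: divr_gt0 => //; rewrite ltr_wpDl.
have dx : d * `|x| < e.
  rewrite /d mulrAC ltr_pdivrMr ?ltr_wpDl // ltr_pM2l //; by rewrite ltrDl.
have : dual_cone K (u - d *: x).
  apply: eK; rewrite -ball_normE /= opprB addrC subrK normrZ gtr0_norm //.
move=> /(_ x Kx); rewrite pairDl pairNl pairZl subr_ge0 => H.
have := pair_gt0 x0; nra.
Qed.
End Interior.

Unset Implicit Arguments.
Theorem theorem4p1 (R : realType) (n m : nat)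
    (KA : set 'rV[R]_n) (uA : 'rV[R]_n)
    (KB : set 'rV[R]_m) (uB : 'rV[R]_m) :
  abstract_state_space KA uA ->
  abstract_state_space KB uB ->
  (exists phi : 'rV[R]_m -> 'rV[R]_n, order_iso KB (dual_cone KA) phi) ->
  (homogeneous KA <->
   (forall alpha : 'rV[R]_n, interior KA alpha -> pair uA alpha = 1 ->
      exists w : 'rV[R]_m -> 'rV[R]_n -> R,
        max_state KB uB KA uA w /\
        order_iso (dual_cone KB) KA (omega_hat w) /\
        omega_hat w uB = alpha)).
Proof.
move=> [pA uAi] [pB uBi] [phi [lphi [phiinv c1 c2] isophi]].
have pA' := pA; move: pA' => [[KA0 KAD] KAZ KAcl KAp _].
split.
- move=> Hhom alpha ai a1.
  pose psi := adj phiinv. pose chi := adj phi.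
  have lphiinv : is_linear phiinv := inv_linear lphi c1 c2.
  have pc : forall a, psi (chi a) = a.
    move=> a; apply: pair_inj => c.
    by rewrite /psi pair_adj // /chi pair_adj // c2.
  have cp : forall b, chi (psi b) = b.
    move=> b; apply: pair_inj => x.
    by rewrite /chi pair_adj // /psi pair_adj // c1.
  have iso : forall b, KA (psi b) <-> dual_cone KB b.
    move=> b; split.
      move=> Kpb x KBx; rewrite pairC -[x]c1 -pair_adj //.
      exact: (proj2 (isophi x) KBx).

    move=> Db; apply: (bipolar pA) => f Df.
    rewrite /psi pair_adj // pairC; apply: Db.
    by apply/isophi; rewrite c2.
  have ipsi : interior KA (psi uB).
    have := @adj_continuous R _ _ phi (psi uB).
    rewrite /continuous_at -/chi cp => /(_ _ uBi).
    move=> /nbhs_ballP [e e0 eH]; apply/nbhs_ballP; exists e => // a /eH /=.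
    by rewrite -iso pc.
  have [g [[lg bg isog] ga]] := Hhom _ _ ipsi ai.
  pose w := fun b a => pair a (g (psi b)).
  have ow : omega_hat w = fun b => g (psi b).
    by apply: funext => b; apply/rowP => i; rewrite mxE /w pair_delta.
  exists w; rewrite ow; split; [split; [split|] | split; [split|]].
  + move=> a c b b' /=; rewrite /w /psi (adj_linear phiinv) lg pairDr pairZr.
    by [].
  + by move=> b c a a' /=; rewrite /w pairDl pairZl.
  + by move=> b a Db Da; apply: Da; apply/isog; apply/iso.
  + by rewrite /w ga.
  + exact: comp_linear (adj_linear phiinv) lg.
  + by apply: comp_bij => //; exists chi.
  + by move=> b; rewrite isog iso.
  + exact: ga.
- move=> Hb x y xi yi.
  have Kx : KA x := nbhs_singleton xi.
  have Ky : KA y := nbhs_singleton yi.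
  have [triv|[x0 y0]] : (forall z : 'rV[R]_n, z = 0) \/ (x != 0 /\ y != 0).
    case: (eqVneq x 0) => [xe|xn]; first by left; apply: interior_trivial KAZ KAp _; rewrite -xe.
    case: (eqVneq y 0) => [ye|yn]; first by left; apply: interior_trivial KAZ KAp _; rewrite -ye.
    by right.
    exists id; split; last by rewrite (triv x) (triv y).
    split; [by move=> a u v | by exists id | by move=> z; split].
  pose cx := pair uA x. pose cy := pair uA y.
  have cx0 : 0 < cx := dual_interior_pos uAi x0 Kx.
  have cy0 : 0 < cy := dual_interior_pos uAi y0 Ky.
  have norm1 : forall z c, pair uA z = c -> 0 < c -> pair uA (c^-1 *: z) = 1.
    by move=> z c zc c0; rewrite pairZr zc mulVf ?gt_eqF.
  have icx : 0 < cx^-1 by rewrite invr_gt0.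
  have icy : 0 < cy^-1 by rewrite invr_gt0.
  have [wx [_ [[lx [Gx FGx GFx] isox] ux]]] :=
    Hb _ (interior_scale KAZ icx xi) (norm1 _ _ erefl cx0).
  have [wy [_ [[ly by_ isoy] uy]]] :=
    Hb _ (interior_scale KAZ icy yi) (norm1 _ _ erefl cy0).
  set Fx := omega_hat wx in lx FGx GFx isox ux.
  set Fy := omega_hat wy in ly by_ isoy uy.
  have lGx : is_linear Gx := inv_linear lx FGx GFx.
  have cc0 : 0 < cy / cx by apply: divr_gt0.
  exists (fun z => (cy / cx) *: Fy (Gx z)); split; first split.
  + move=> a u v; rewrite lGx ly !scalerDr !scalerA; congr (_ + _).
    by rewrite mulrC.
  + apply: (@comp_bij _ _ _ _ (fun z => Fy (Gx z)) (fun z => (cy / cx) *: z)).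
      by apply: comp_bij => //; exists Fx.
    exists (fun z => (cy / cx)^-1 *: z) => z; rewrite scalerA.
      by rewrite mulVf ?gt_eqF // scale1r.
    by rewrite mulfV ?gt_eqF // scale1r.
  + move=> z; split => H.
      have : KA (Fy (Gx z)).
        have -> : Fy (Gx z) = (cy / cx)^-1 *: ((cy / cx) *: Fy (Gx z)).
          by rewrite scalerA mulVf ?gt_eqF // scale1r.
        by apply: KAZ => //; rewrite invr_ge0 ltW.
      by rewrite isoy -isox GFx.
    apply: KAZ; first exact: ltW.
    by rewrite isoy -isox GFx.
  + have -> : x = cx *: Fx uB by rewrite ux scalerA mulfV ?gt_eqF // scale1r.
    rewrite (linZ _ _ lGx) FGx (linZ _ _ ly) uy !scalerA.
    by rewrite mulfVK ?gt_eqF // mulfV ?gt_eqF // scale1r.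
Qed.
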